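(* Let $D$ be a chain BN on $X_1,\dots,X_n$ with all conditional probabilities in $(0,1)$, let $f(x)=x_n$, and let $D_{k,\mu}=\mu_{k,1}-\mu_{k,0}$ and $D_{k,\sigma}=\sigma_{k,1}-\sigma_{k,0}$ (signed). Then $$\sum_{S\subseteq[n]}\hat f_S=\sum_{k=1}^{n}(\mu_{k,0}+\sigma_{k,0})\prod_{\ell=k+1}^{n}(D_{\ell,\mu}+D_{\ell,\sigma}).$$
   Context: A chain BN on $X_1,\dots,X_n$ has $\operatorname{pa}(1)=\emptyset$, $\operatorname{pa}(i)=\{i-1\}$ for $i\ge2$; $\mu_{i,b}=P(X_i=1\mid X_{i-1}=b)$, $\sigma_{i,b}=\sqrt{\mu_{i,b}(1-\mu_{i,b})}$ for $i\ge2$, $b\in\{0,1\}$; for the root, $\mu_{1,0}=\mu_{1,1}=P(X_1=1)$ and $\sigma_{1,0}=\sigma_{1,1}=\sqrt{\mu_{1,0}(1-\mu_{1,0})}$. The BN-induced basis is $\phi_i(x)=(x_i-\mu_{i,x_{i-1}})/\sigma_{i,x_{i-1}}$ (root: $(x_1-\mu_{1,0})/\sigma_{1,0}$), $\phi_S=\prod_{i\in S}\phi_i$, and $\hat f_S=\mathbb{E}_D[f(X)\phi_S(X)]$. *)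

(* Defs.v *)
From HB Require Import structures.
From mathcomp Require Import all_boot all_order all_algebra.
Set Implicit Arguments. Unset Strict Implicit. Unset Printing Implicit Defensive.
Import Order.TTheory GRing.Theory Num.Theory.
Local Open Scope ring_scope.

Section ChainBN.
Variable R : rcfType.
Variable n : nat.
(* p1 = P(X_1 = 1); q k b = P(X_k = 1 | X_{k-1} = b) for 2 <= k <= n. *)
Variable p1 : R.
Variable q : nat -> bool -> R.

(* value of X_k (1-based) in the assignment x; X_0 is a dummy (false) *)
Definition xv (x : {ffun 'I_n -> bool}) (k : nat) : bool :=
  if k is k'.+1 then (if insub k' is Some i then x i else false) else false.

Definition mu (k : nat) (b : bool) : R := if k == 1%N then p1 else q k b.
Definition sigma (k : nat) (b : bool) : R := Num.sqrt (mu k b * (1 - mu k b)).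

Definition prob (x : {ffun 'I_n -> bool}) : R :=
  \prod_(1 <= k < n.+1)
     (if xv x k then mu k (xv x k.-1) else 1 - mu k (xv x k.-1)).

Definition expect (g : {ffun 'I_n -> bool} -> R) : R :=
  \sum_(x : {ffun 'I_n -> bool}) prob x * g x.

Definition phi (k : nat) (x : {ffun 'I_n -> bool}) : R :=
  ((xv x k)%:R - mu k (xv x k.-1)) / sigma k (xv x k.-1).

(* phi_S for S a subset of [n] (element i : 'I_n stands for index i+1) *)
Definition phiS (S : {set 'I_n}) (x : {ffun 'I_n -> bool}) : R :=
  \prod_(i in S) phi i.+1 x.

Definition fhat (f : {ffun 'I_n -> bool} -> R) (S : {set 'I_n}) : R :=
  expect (fun x => f x * phiS S x).

Definition f_last (x : {ffun 'I_n -> bool}) : R := (xv x n)%:R.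

Definition Dmu (k : nat) : R := mu k true - mu k false.
Definition Dsig (k : nat) : R := sigma k true - sigma k false.

End ChainBN.

(* Main.v *)
Require Import Defs.
From HB Require Import structures.
From mathcomp Require Import all_boot all_order all_algebra.
From mathcomp Require Import ring.
Set Implicit Arguments. Unset Strict Implicit. Unset Printing Implicit Defensive.
Import Order.TTheory GRing.Theory Num.Theory.
Local Open Scope ring_scope.

Lemma xv_lt m (x : {ffun 'I_m -> bool}) k (h : (k < m)%N) : xv x k.+1 = x (Ordinal h).
Proof. by rewrite /= insubT. Qed.

Lemma xv_ge m (x : {ffun 'I_m -> bool}) k : (m <= k)%N -> xv x k.+1 = false.
Proof. by move=> h; rewrite /= insubF // ltnNge h. Qed.

Definition ext m (y : {ffun 'I_m -> bool}) (b : bool) : {ffun 'I_m.+1 -> bool} :=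
  [ffun i : 'I_m.+1 => oapp y b (insub (val i) : option 'I_m)].

Definition spl m (x : {ffun 'I_m.+1 -> bool}) : {ffun 'I_m -> bool} * bool :=
  ([ffun j : 'I_m => x (widen_ord (leqnSn m) j)], x ord_max).

Lemma xv_ext m (y : {ffun 'I_m -> bool}) b k :
  xv (ext y b) k = if k == m.+1 then b else xv y k.
Proof.
case: k => [|k] //; rewrite eqSS.
have [hk|hk] := ltnP k m.
  have hk' : (k < m.+1)%N by apply: ltnW.
  by rewrite (xv_lt _ hk) (xv_lt _ hk') ffunE /= insubT /= (ltn_eqF hk).
rewrite (xv_ge y hk).
case: eqP => [->|hne].
  by rewrite (xv_lt _ (ltnSn m)) ffunE /= insubF // ltnn.
by rewrite xv_ge // ltn_neqAle eq_sym; apply/andP; split=> //; apply/eqP.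
Qed.

Lemma ext_bij m : bijective (fun p : {ffun 'I_m -> bool} * bool => ext p.1 p.2).
Proof.
exists (@spl m).
  case=> y b; rewrite /spl /=; congr pair.
    by apply/ffunP=> j; rewrite !ffunE /= valK.
  by rewrite ffunE /= insubF // ltnn.
move=> x; apply/ffunP=> i; rewrite /spl ffunE /=.
case: insubP => [j hj ej|hn] /=.
  by rewrite ffunE; congr (x _); apply: val_inj.
congr (x _); apply: val_inj => /=.
by apply/eqP; rewrite eqn_leq leqNgt hn -ltnS ltn_ord.
Qed.

Definition G (R : rcfType) (p1 : R) q k (a b : bool) : R :=
  (if b then mu p1 q k a else 1 - mu p1 q k a) *
  (1 + (b%:R - mu p1 q k a) / sigma p1 q k a).

Definition Sig (R : rcfType) (p1 : R) q m (w : bool -> R) : R :=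
  \sum_(x : {ffun 'I_m -> bool})
    (\prod_(1 <= k < m.+1) G p1 q k (xv x k.-1) (xv x k)) * w (xv x m).

Definition step (R : rcfType) (p1 : R) q k (w : bool -> R) (a : bool) : R :=
  G p1 q k a true * w true + G p1 q k a false * w false.

Fixpoint Back (R : rcfType) (p1 : R) q m (w : bool -> R) : R :=
  if m is m'.+1 then Back p1 q m' (step p1 q m'.+1 w) else w false.

Lemma SigS (R : rcfType) (p1 : R) q m w :
  Sig p1 q m.+1 w = Sig p1 q m (step p1 q m.+1 w).
Proof.
rewrite /Sig (reindex _ (onW_bij _ (ext_bij m))).
rewrite -(pair_bigA _ (fun y b => \prod_(1 <= k < m.+2) G p1 q k (xv (ext y b) k.-1) (xv (ext y b) k) * w (xv (ext y b) m.+1))).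
apply: eq_bigr => y _; rewrite big_bool.
have E b : \prod_(1 <= k < m.+2) G p1 q k (xv (ext y b) k.-1) (xv (ext y b) k)
   = (\prod_(1 <= k < m.+1) G p1 q k (xv y k.-1) (xv y k)) * G p1 q m.+1 (xv y m) b.
  rewrite big_nat_recr // !xv_ext eqxx (ltn_eqF (ltnSn m)); congr (_ * _).
  apply: eq_big_nat => k /andP [_ hk].
  rewrite !xv_ext (ltn_eqF hk) ltn_eqF //.
  exact: leq_ltn_trans (leq_pred k) hk.
rewrite !E !xv_ext eqxx /step /=; ring.
Qed.

Lemma Sig0 (R : rcfType) (p1 : R) q w : Sig p1 q 0 w = w false.
Proof.
rewrite /Sig.
under eq_bigr do rewrite big_geq // mul1r /=.
rewrite (big_pred1 [ffun i : 'I_0 => false]) // => x /=.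
by apply/esym/eqP/ffunP => -[].
Qed.

Lemma Sig_Back (R : rcfType) (p1 : R) q m w : Sig p1 q m w = Back p1 q m w.
Proof. by elim: m w => [|m IH] w; rewrite ?Sig0 // SigS IH. Qed.

Lemma eq_Back (R : rcfType) (p1 : R) q m w1 w2 :
  w1 =1 w2 -> Back p1 q m w1 = Back p1 q m w2.
Proof.
elim: m w1 w2 => [|m IH] w1 w2 e /=; first exact: e.
by apply: IH => a; rewrite /step !e.
Qed.

Lemma mu_range (R : rcfType) n (p1 : R) q (hp1 : 0 < p1 < 1)
  (hq : forall k b, (2 <= k <= n)%N -> 0 < q k b < 1) k a :
  (1 <= k <= n)%N -> 0 < mu p1 q k a < 1.
Proof.
move=> /andP [h1 h2]; rewrite /mu; case: eqP => [_|hk] //.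
apply: hq; rewrite h2 andbT ltn_neqAle h1 andbT eq_sym; exact/eqP.
Qed.

Lemma step_aff (R : rcfType) n (p1 : R) q (hp1 : 0 < p1 < 1)
  (hq : forall k b, (2 <= k <= n)%N -> 0 < q k b < 1) k (al be : R) a :
  (1 <= k <= n)%N ->
  step p1 q k (fun b => al + be * b%:R) a = al + be * (mu p1 q k a + sigma p1 q k a).
Proof.
move=> hk; have /andP [m0 m1] := mu_range hp1 hq a hk.
rewrite /step /G /=.
set s := sigma p1 q k a; set u := mu p1 q k a.
have hpos : 0 < u * (1 - u) by rewrite mulr_gt0 // subr_gt0.
have hs : 0 < s by rewrite /s /sigma sqrtr_gt0.
have hs2 : s ^+ 2 = u * (1 - u) by rewrite /s /sigma sqr_sqrtr // ltW.
have s0 : s != 0 by rewrite gt_eqF.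
apply/eqP; rewrite -subr_eq0; apply/eqP.
transitivity ((u * (1 - u) - s ^+ 2) * be / s); last by rewrite hs2 subrr !mul0r.
by field.
Qed.

Definition Esum (R : rcfType) (p1 : R) q m : R :=
  \sum_(1 <= k < m.+1)
     (mu p1 q k false + sigma p1 q k false) *
     \prod_(k.+1 <= l < m.+1) (Dmu p1 q l + Dsig p1 q l).

Lemma EsumS (R : rcfType) (p1 : R) q m :
  Esum p1 q m.+1 = (mu p1 q m.+1 false + sigma p1 q m.+1 false)
     + (Dmu p1 q m.+1 + Dsig p1 q m.+1) * Esum p1 q m.
Proof.
rewrite /Esum big_nat_recr //= [\prod_(m.+2 <= l < m.+2) _]big_geq // mulr1 addrC; congr (_ + _).
rewrite big_distrr /=; apply: eq_big_nat => k /andP [_ hk].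
by rewrite big_nat_recr //=; ring.
Qed.

Lemma Back_aff (R : rcfType) n (p1 : R) q (hp1 : 0 < p1 < 1)
  (hq : forall k b, (2 <= k <= n)%N -> 0 < q k b < 1) m :
  (m <= n)%N -> forall al be,
  Back p1 q m (fun b => al + be * b%:R) = al + be * Esum p1 q m.
Proof.
elim: m => [|m IH] hm al be /=.
  by rewrite /Esum big_geq // mulr0.
rewrite (@eq_Back _ _ _ _ _ (fun b => (al + be * (mu p1 q m.+1 false + sigma p1 q m.+1 false))
          + (be * (Dmu p1 q m.+1 + Dsig p1 q m.+1)) * b%:R)).
  by rewrite IH ?(ltnW hm) // EsumS; ring.
move=> a; rewrite (step_aff hp1 hq) //.
by case: a; rewrite /Dmu /Dsig /=; ring.
Qed.

Lemma sum_subsets (R : rcfType) n (F : 'I_n -> R) :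
  \sum_(S : {set 'I_n}) \prod_(i in S) F i = \prod_(i : 'I_n) (F i + 1).
Proof.
rewrite (bigA_distr _ _ F (fun _ => 1)); apply: eq_bigr => S _.
by rewrite big_mkcond.
Qed.

Theorem mainTheorem11 (R : rcfType) (n : nat) (hn : (0 < n)%N)
  (p1 : R) (q : nat -> bool -> R)
  (hp1 : 0 < p1 < 1)
  (hq : forall k b, (2 <= k <= n)%N -> 0 < q k b < 1) :
  \sum_(S : {set 'I_n}) fhat p1 q (@f_last R n) S =
  \sum_(1 <= k < n.+1)
     (mu p1 q k false + sigma p1 q k false) *
     \prod_(k.+1 <= l < n.+1) (Dmu p1 q l + Dsig p1 q l).
Proof.
transitivity (Sig p1 q n (fun b => 0 + 1 * b%:R)).
  rewrite /fhat /expect exchange_big /Sig; apply: eq_bigr => x _.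
  rewrite -big_distrr /= -big_distrr /= /phiS sum_subsets.
  have -> : \prod_(i : 'I_n) (phi p1 q i.+1 x + 1)
     = \prod_(1 <= k < n.+1) (1 + phi p1 q k x).
    by rewrite big_add1 /= big_mkord; apply: eq_bigr => i _; rewrite addrC.
  rewrite add0r mul1r /f_last mulrCA mulrC; congr (_ * _).
  by rewrite /prob -big_split.
by rewrite Sig_Back (Back_aff hp1 hq (leqnn n)) add0r mul1r.
Qed.
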